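(* Let $\mathfrak{g}$ be a finite-dimensional complex Lie algebra and let $\mathfrak{p}$ be a perfect Lie subalgebra of $\mathfrak{g}$ (i.e. $[\mathfrak{p},\mathfrak{p}]=\mathfrak{p}$). Then every CPA-structure on $\mathfrak{g}$ satisfies $\mathfrak{p}\cdot\mathfrak{g}=0$, i.e. $x\cdot y=0$ for all $x\in\mathfrak{p}$, $y\in\mathfrak{g}$.
   Context: A CPA-structure on a Lie algebra $\mathfrak{g}$ with bracket $[\,,]$ is a bilinear product $x\cdot y$ on $\mathfrak{g}$ satisfying, for all $x,y,z$: $x\cdot y=y\cdot x$; $[x,y]\cdot z=x\cdot(y\cdot z)-y\cdot(x\cdot z)$; $x\cdot[y,z]=[x\cdot y,z]+[y,x\cdot z]$. *)

(* Defs.v *)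
(* The complex numbers are modelled as R[i] = complex R for
   an arbitrary R : realType (every realType is a complete archimedean
   ordered field, i.e. a copy of the real numbers). *)
From HB Require Import structures.
From mathcomp Require Import all_boot all_order all_algebra.
From mathcomp Require Import reals.
From mathcomp Require Import complex.
Set Implicit Arguments. Unset Strict Implicit. Unset Printing Implicit Defensive.
Import Order.TTheory GRing.Theory Num.Theory.
Local Open Scope ring_scope.

Section LieDefs.
Variables (K : fieldType) (V : vectType K).

Definition bilinear_op (m : V -> V -> V) : Prop :=
  (forall (a : K) (x y z : V), m (a *: x + y) z = a *: m x z + m y z) /\
  (forall (a : K) (x y z : V), m x (a *: y + z) = a *: m x y + m x z).

Definition lie_bracket (br : V -> V -> V) : Prop :=
  [/\ bilinear_op br,
      (forall x : V, br x x = 0) &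
      (forall x y z : V, br x (br y z) + br y (br z x) + br z (br x y) = 0)].

Definition lie_subalgebra (br : V -> V -> V) (p : {vspace V}) : Prop :=
  forall x y, x \in p -> y \in p -> br x y \in p.

Definition in_derived (br : V -> V -> V) (p : {vspace V}) (z : V) : Prop :=
  exists n (xs ys : 'I_n -> V),
    (forall i, xs i \in p /\ ys i \in p) /\ z = \sum_(i < n) br (xs i) (ys i).

Definition perfect (br : V -> V -> V) (p : {vspace V}) : Prop :=
  (forall z, in_derived br p z -> z \in p) /\
  (forall z, z \in p -> in_derived br p z).

Definition CPA_structure (br : V -> V -> V) (m : V -> V -> V) : Prop :=
  [/\ bilinear_op m,
      (forall x y, m x y = m y x),
      (forall x y z, m (br x y) z = m x (m y z) - m y (m x z)) &
      (forall x y z, m x (br y z) = br (m x y) z + br y (m x z))].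
End LieDefs.

(* Main.v *)
Require Import Defs.
From HB Require Import structures.
From mathcomp Require Import all_boot all_order all_algebra.
From mathcomp Require Import reals.
From mathcomp Require Import complex.
From mathcomp Require Import ring.
Import GRing.Theory Num.Theory.
Local Open Scope ring_scope.

Section Basics.
Variables (K : fieldType) (V : vectType K).

Lemma bil_l (f : V -> V -> V) : bilinear_op f ->
  [/\ forall x y z, f (x + y) z = f x z + f y z,
      forall x z, f (- x) z = - f x z &
      forall x y z, f (x - y) z = f x z - f y z].
Proof.
case=> hl _.
have h0 : forall z, f 0 z = 0.
  move=> z; have := hl 1 0 0 z; rewrite scaler0 addr0 scale1r => e.
  by apply: (@addrI _ (f 0 z)); rewrite addr0 -e.
have hD : forall x y z, f (x + y) z = f x z + f y z.
  by move=> x y z; have := hl 1 x y z; rewrite !scale1r.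
have hN : forall x z, f (- x) z = - f x z.
  by move=> x z; have := hl (-1) x 0 z; rewrite !scaleN1r !addr0 h0 addr0.
by split=> // x y z; rewrite hD hN.
Qed.

Lemma bil_r (f : V -> V -> V) : bilinear_op f ->
  [/\ forall x y z, f x (y + z) = f x y + f x z,
      forall x y, f x (- y) = - f x y &
      forall x y z, f x (y - z) = f x y - f x z].
Proof.
case=> _ hl.
have h0 : forall x, f x 0 = 0.
  move=> x; have := hl 1 x 0 0; rewrite scaler0 addr0 scale1r => e.
  by apply: (@addrI _ (f x 0)); rewrite addr0 -e.
have hD : forall x y z, f x (y + z) = f x y + f x z.
  by move=> x y z; have := hl 1 x y z; rewrite !scale1r.
have hN : forall x y, f x (- y) = - f x y.
  by move=> x y; have := hl (-1) x y 0; rewrite !scaleN1r !addr0 h0 addr0.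
by split=> // x y z; rewrite hD hN.
Qed.

Lemma coord_zero (v : V) :
  (forall i, coord (vbasis (fullv : {vspace V})) i v = 0) -> v = 0.
Proof.
move=> h; rewrite (coord_vbasis (memvf v)).
by apply: big1 => i _; rewrite h scale0r.
Qed.
End Basics.
Lemma cert {F : comNzRingType} {v0 v1 v2 v3 v4 v5 v6 v7 v8 v9 v10 v11 v12 v13 v14 v15 v16 v17 v18 v19 v20 v21 v22 v23 v24 v25 v26 v27 v28 v29 v30 v31 v32 v33 v34 v35 v36 v37 v38 v39 v40 v41 v42 v43 v44 v45 v46 v47 v48 v49 v50 v51 v52 v53 v54 : F} :
  v1 = v2 - v3 ->
  v4 = v5 + v6 ->
  v7 = v8 - v9 ->
  v10 = v11 - v12 ->
  v13 = v14 - v15 ->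
  v16 = v17 - v18 ->
  v19 = v20 + v21 ->
  v22 = v23 - v24 ->
  v25 = v26 + v27 ->
  v28 = v29 - v30 ->
  v31 = v32 - v33 ->
  v34 = v35 + v36 ->
  v37 = v38 - v39 ->
  v40 = v41 - v42 ->
  v43 = v44 - v45 ->
  v46 = v47 - v48 ->
  v49 = v45 - v48 ->
  v1 = - v50 ->
  v2 = v12 ->
  v3 = v47 ->
  v4 = - v14 ->
  v5 = - v50 ->
  v6 = v36 ->
  v7 = v15 ->
  v8 = v45 ->
  v10 = v51 ->
  v11 = v9 ->
  v13 = - v52 ->
  v16 = - v52 ->
  v19 = - v17 ->
  v20 = - v51 ->
  v22 = - v28 ->
  v25 = - v23 ->
  v26 = - v53 ->
  v27 = v21 ->
  v31 = - v29 ->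
  v33 = v48 ->
  v34 = - v30 ->
  v35 = - v54 ->
  v37 = v53 ->
  v38 = v32 ->
  v39 = v42 ->
  v40 = v54 ->
  v41 = v44 ->
  v43 = - v24 ->
  v46 = - v18 ->
  v49 = - v0 ->
  v0 *+ 2 = 0.
Proof.
move=> H0 H1 H2 H3 H4 H5 H6 H7 H8 H9 H10 H11 H12 H13 H14 H15 H16 H17 H18 H19 H20 H21 H22 H23 H24 H25 H26 H27 H28 H29 H30 H31 H32 H33 H34 H35 H36 H37 H38 H39 H40 H41 H42 H43 H44 H45 H46.
have E : v0 *+ 2 = (1) * (v1 - (v2 - v3)) + (1) * (v4 - (v5 + v6)) + (1) * (v7 - (v8 - v9)) + (1) * (v10 - (v11 - v12)) + (-1) * (v13 - (v14 - v15)) + (1) * (v16 - (v17 - v18)) + (-1) * (v19 - (v20 + v21)) + (-1) * (v22 - (v23 - v24)) + (1) * (v25 - (v26 + v27)) + (-1) * (v28 - (v29 - v30)) + (1) * (v31 - (v32 - v33)) + (-1) * (v34 - (v35 + v36)) + (-1) * (v37 - (v38 - v39)) + (1) * (v40 - (v41 - v42)) + (-1) * (v43 - (v44 - v45)) + (1) * (v46 - (v47 - v48)) + (-2) * (v49 - (v45 - v48)) + (-1) * (v1 - - v50) + (1) * (v2 - v12) + (-1) * (v3 - v47) + (-1) * (v4 - - v14) + (1) * (v5 - - v50) + (1) * (v6 - v36) + (-1) * (v7 - v15) + (1) * (v8 - v45) + (-1) * (v10 - v51) + (1) * (v11 - v9) + (1) * (v13 - - v52) + (-1) * (v16 - - v52)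 + (1) * (v19 - - v17) + (-1) * (v20 - - v51) + (1) * (v22 - - v28) + (-1) * (v25 - - v23) + (1) * (v26 - - v53) + (1) * (v27 - v21) + (-1) * (v31 - - v29) + (-1) * (v33 - v48) + (1) * (v34 - - v30) + (-1) * (v35 - - v54) + (1) * (v37 - v53) + (-1) * (v38 - v32) + (1) * (v39 - v42) + (-1) * (v40 - v54) + (1) * (v41 - v44) + (1) * (v43 - - v24) + (-1) * (v46 - - v18) + (2) * (v49 - - v0) by ring.
have E0 : v1 - (v2 - v3) = 0 by rewrite H0 subrr.
have E1 : v4 - (v5 + v6) = 0 by rewrite H1 subrr.
have E2 : v7 - (v8 - v9) = 0 by rewrite H2 subrr.
have E3 : v10 - (v11 - v12) = 0 by rewrite H3 subrr.
have E4 : v13 - (v14 - v15) = 0 by rewrite H4 subrr.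
have E5 : v16 - (v17 - v18) = 0 by rewrite H5 subrr.
have E6 : v19 - (v20 + v21) = 0 by rewrite H6 subrr.
have E7 : v22 - (v23 - v24) = 0 by rewrite H7 subrr.
have E8 : v25 - (v26 + v27) = 0 by rewrite H8 subrr.
have E9 : v28 - (v29 - v30) = 0 by rewrite H9 subrr.
have E10 : v31 - (v32 - v33) = 0 by rewrite H10 subrr.
have E11 : v34 - (v35 + v36) = 0 by rewrite H11 subrr.
have E12 : v37 - (v38 - v39) = 0 by rewrite H12 subrr.
have E13 : v40 - (v41 - v42) = 0 by rewrite H13 subrr.
have E14 : v43 - (v44 - v45) = 0 by rewrite H14 subrr.
have E15 : v46 - (v47 - v48) = 0 by rewrite H15 subrr.
have E16 : v49 - (v45 - v48) = 0 by rewrite H16 subrr.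
have E17 : v1 - - v50 = 0 by rewrite H17 subrr.
have E18 : v2 - v12 = 0 by rewrite H18 subrr.
have E19 : v3 - v47 = 0 by rewrite H19 subrr.
have E20 : v4 - - v14 = 0 by rewrite H20 subrr.
have E21 : v5 - - v50 = 0 by rewrite H21 subrr.
have E22 : v6 - v36 = 0 by rewrite H22 subrr.
have E23 : v7 - v15 = 0 by rewrite H23 subrr.
have E24 : v8 - v45 = 0 by rewrite H24 subrr.
have E25 : v10 - v51 = 0 by rewrite H25 subrr.
have E26 : v11 - v9 = 0 by rewrite H26 subrr.
have E27 : v13 - - v52 = 0 by rewrite H27 subrr.
have E28 : v16 - - v52 = 0 by rewrite H28 subrr.
have E29 : v19 - - v17 = 0 by rewrite H29 subrr.
have E30 : v20 - - v51 = 0 by rewrite H30 subrr.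
have E31 : v22 - - v28 = 0 by rewrite H31 subrr.
have E32 : v25 - - v23 = 0 by rewrite H32 subrr.
have E33 : v26 - - v53 = 0 by rewrite H33 subrr.
have E34 : v27 - v21 = 0 by rewrite H34 subrr.
have E35 : v31 - - v29 = 0 by rewrite H35 subrr.
have E36 : v33 - v48 = 0 by rewrite H36 subrr.
have E37 : v34 - - v30 = 0 by rewrite H37 subrr.
have E38 : v35 - - v54 = 0 by rewrite H38 subrr.
have E39 : v37 - v53 = 0 by rewrite H39 subrr.
have E40 : v38 - v32 = 0 by rewrite H40 subrr.
have E41 : v39 - v42 = 0 by rewrite H41 subrr.
have E42 : v40 - v54 = 0 by rewrite H42 subrr.
have E43 : v41 - v44 = 0 by rewrite H43 subrr.
have E44 : v43 - - v24 = 0 by rewrite H44 subrr.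
have E45 : v46 - - v18 = 0 by rewrite H45 subrr.
have E46 : v49 - - v0 = 0 by rewrite H46 subrr.
rewrite E E0 E1 E2 E3 E4 E5 E6 E7 E8 E9 E10 E11 E12 E13 E14 E15 E16 E17 E18 E19 E20 E21 E22 E23 E24 E25 E26 E27 E28 E29 E30 E31 E32 E33 E34 E35 E36 E37 E38 E39 E40 E41 E42 E43 E44 E45 E46; ring.
Qed.

Section CPA.
Variables (K : numFieldType) (V : vectType K) (br m : V -> V -> V).
Hypotheses (Hbr : lie_bracket br) (Hm : CPA_structure br m).

Let mbil : bilinear_op m. Proof. by case: Hm. Qed.
Let bbil : bilinear_op br. Proof. by case: Hbr. Qed.
Lemma mC x y : m x y = m y x. Proof. by case: Hm. Qed.
Lemma hR1 x y z : m (br x y) z = m x (m y z) - m y (m x z). Proof. by case: Hm. Qed.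
Lemma hR2 x y z : m x (br y z) = br (m x y) z + br y (m x z). Proof. by case: Hm. Qed.
Lemma mDl x y z : m (x + y) z = m x z + m y z. Proof. by case: (@bil_l _ _ _ mbil). Qed.
Lemma mNl x z : m (- x) z = - m x z. Proof. by case: (@bil_l _ _ _ mbil). Qed.
Lemma mDr x y z : m x (y + z) = m x y + m x z. Proof. by case: (@bil_r _ _ _ mbil). Qed.
Lemma mNr x y : m x (- y) = - m x y. Proof. by case: (@bil_r _ _ _ mbil). Qed.
Lemma mBr x y z : m x (y - z) = m x y - m x z. Proof. by case: (@bil_r _ _ _ mbil). Qed.
Lemma brDl x y z : br (x + y) z = br x z + br y z. Proof. by case: (@bil_l _ _ _ bbil). Qed.
Lemma brNl x z : br (- x) z = - br x z. Proof. by case: (@bil_l _ _ _ bbil). Qed.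
Lemma brDr x y z : br x (y + z) = br x y + br x z. Proof. by case: (@bil_r _ _ _ bbil). Qed.
Lemma brNr x y : br x (- y) = - br x y. Proof. by case: (@bil_r _ _ _ bbil). Qed.
Lemma brBr x y z : br x (y - z) = br x y - br x z. Proof. by case: (@bil_r _ _ _ bbil). Qed.
Lemma brC x y : br x y = - br y x.
Proof.
have a0 : forall u, br u u = 0 by case: Hbr.
have := a0 (x + y); rewrite brDl !brDr !a0 add0r addr0 => /eqP.
by rewrite addr_eq0 => /eqP.
Qed.
Lemma key a b c z : m (br a b) (m c z) = 0.
Proof.
have h0 := hR1 (m b z) a c.
have h1 := congr1 (m c) (hR2 b z a); rewrite mDr in h1.
have h2 := congr1 (m b) (hR1 a z c); rewrite mBr in h2.
have h3 := hR1 b (m a c) z.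
have h4 := hR1 c b (br a z).
have h5 := hR1 z a (br b c).
have h6 := congr1 (m z) (hR2 a c b); rewrite mDr in h6.
have h7 := hR1 z b (br a c).
have h8 := congr1 (m z) (hR2 b c a); rewrite mDr in h8.
have h9 := hR1 a c (br b z).
have h10 := congr1 (m a) (hR1 z b c); rewrite mBr in h10.
have h11 := congr1 (m c) (hR2 a z b); rewrite mDr in h11.
have h12 := hR1 a (m b c) z.
have h13 := hR1 b (m a z) c.
have h14 := congr1 (m b) (hR1 c a z); rewrite mBr in h14.
have h15 := congr1 (m a) (hR1 c b z); rewrite mBr in h15.
have h16 := hR1 b a (m c z).
have o0 : (m (br (m b z) a) c) = - (m c (br a (m b z))) by rewrite ?(brC (m b z) a) ?mNl ?mNr ?brNl ?brNr ?opprK ?(mC (br a (m b z)) c) ?mNl ?mNr ?brNl ?brNr ?opprK.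
have o1 : (m (m b z) (m a c)) = (m (m a c) (m b z)) by rewrite ?(mC (m b z) (m a c)) ?mNl ?mNr ?brNl ?brNr ?opprK.
have o2 : (m a (m (m b z) c)) = (m a (m c (m b z))) by rewrite ?(mC (m b z) c) ?mNl ?mNr ?brNl ?brNr ?opprK.
have o3 : (m c (m b (br z a))) = - (m c (m b (br a z))) by rewrite ?(brC z a) ?mNl ?mNr ?brNl ?brNr ?opprK.
have o4 : (m c (br (m b z) a)) = - (m c (br a (m b z))) by rewrite ?(brC (m b z) a) ?mNl ?mNr ?brNl ?brNr ?opprK.
have o5 : (m c (br z (m b a))) = (m c (br z (m a b))) by rewrite ?(mC b a) ?mNl ?mNr ?brNl ?brNr ?opprK.
have o6 : (m b (m (br a z) c)) = (m b (m c (br a z))) by rewrite ?(mC (br a z) c) ?mNl ?mNr ?brNl ?brNr ?opprK.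
have o7 : (m b (m a (m z c))) = (m b (m a (m c z))) by rewrite ?(mC z c) ?mNl ?mNr ?brNl ?brNr ?opprK.
have o8 : (m (br b (m a c)) z) = (m z (br b (m a c))) by rewrite ?(mC (br b (m a c)) z) ?mNl ?mNr ?brNl ?brNr ?opprK.
have o9 : (m b (m (m a c) z)) = (m b (m z (m a c))) by rewrite ?(mC (m a c) z) ?mNl ?mNr ?brNl ?brNr ?opprK.
have o10 : (m (br c b) (br a z)) = - (m (br a z) (br b c)) by rewrite ?(brC c b) ?mNl ?mNr ?brNl ?brNr ?opprK ?(mC (br b c) (br a z)) ?mNl ?mNr ?brNl ?brNr ?opprK.
have o11 : (m (br z a) (br b c)) = - (m (br a z) (br b c)) by rewrite ?(brC z a) ?mNl ?mNr ?brNl ?brNr ?opprK.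
have o12 : (m z (m a (br c b))) = - (m z (m a (br b c))) by rewrite ?(brC c b) ?mNl ?mNr ?brNl ?brNr ?opprK.
have o13 : (m z (br (m a c) b)) = - (m z (br b (m a c))) by rewrite ?(brC (m a c) b) ?mNl ?mNr ?brNl ?brNr ?opprK.
have o14 : (m (br z b) (br a c)) = - (m (br a c) (br b z)) by rewrite ?(brC z b) ?mNl ?mNr ?brNl ?brNr ?opprK ?(mC (br b z) (br a c)) ?mNl ?mNr ?brNl ?brNr ?opprK.
have o15 : (m z (m b (br c a))) = - (m z (m b (br a c))) by rewrite ?(brC c a) ?mNl ?mNr ?brNl ?brNr ?opprK.
have o16 : (m z (br (m b c) a)) = - (m z (br a (m b c))) by rewrite ?(brC (m b c) a) ?mNl ?mNr ?brNl ?brNr ?opprK.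
have o17 : (m z (br c (m b a))) = (m z (br c (m a b))) by rewrite ?(mC b a) ?mNl ?mNr ?brNl ?brNr ?opprK.
have o18 : (m a (m (br z b) c)) = - (m a (m c (br b z))) by rewrite ?(brC z b) ?mNl ?mNr ?brNl ?brNr ?opprK ?(mC (br b z) c) ?mNl ?mNr ?brNl ?brNr ?opprK.
have o19 : (m a (m b (m z c))) = (m a (m b (m c z))) by rewrite ?(mC z c) ?mNl ?mNr ?brNl ?brNr ?opprK.
have o20 : (m c (m a (br z b))) = - (m c (m a (br b z))) by rewrite ?(brC z b) ?mNl ?mNr ?brNl ?brNr ?opprK.
have o21 : (m c (br (m a z) b)) = - (m c (br b (m a z))) by rewrite ?(brC (m a z) b) ?mNl ?mNr ?brNl ?brNr ?opprK.
have o22 : (m (br a (m b c)) z) = (m z (br a (m b c))) by rewrite ?(mC (br a (m b c)) z) ?mNl ?mNr ?brNl ?brNr ?opprK.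
have o23 : (m a (m (m b c) z)) = (m a (m z (m b c))) by rewrite ?(mC (m b c) z) ?mNl ?mNr ?brNl ?brNr ?opprK.
have o24 : (m (m b c) (m a z)) = (m (m a z) (m b c)) by rewrite ?(mC (m b c) (m a z)) ?mNl ?mNr ?brNl ?brNr ?opprK.
have o25 : (m (br b (m a z)) c) = (m c (br b (m a z))) by rewrite ?(mC (br b (m a z)) c) ?mNl ?mNr ?brNl ?brNr ?opprK.
have o26 : (m b (m (m a z) c)) = (m b (m c (m a z))) by rewrite ?(mC (m a z) c) ?mNl ?mNr ?brNl ?brNr ?opprK.
have o27 : (m b (m (br c a) z)) = - (m b (m z (br a c))) by rewrite ?(brC c a) ?mNl ?mNr ?brNl ?brNr ?opprK ?(mC (br a c) z) ?mNl ?mNr ?brNl ?brNr ?opprK.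
have o28 : (m a (m (br c b) z)) = - (m a (m z (br b c))) by rewrite ?(brC c b) ?mNl ?mNr ?brNl ?brNr ?opprK ?(mC (br b c) z) ?mNl ?mNr ?brNl ?brNr ?opprK.
have o29 : (m (br b a) (m c z)) = - (m (br a b) (m c z)) by rewrite ?(brC b a) ?mNl ?mNr ?brNl ?brNr ?opprK.
apply: coord_zero => i.
have c0 := congr1 (coord (vbasis (fullv : {vspace V})) i) h0; rewrite ?raddfB ?raddfD ?raddfN in c0.
have c1 := congr1 (coord (vbasis (fullv : {vspace V})) i) h1; rewrite ?raddfB ?raddfD ?raddfN in c1.
have c2 := congr1 (coord (vbasis (fullv : {vspace V})) i) h2; rewrite ?raddfB ?raddfD ?raddfN in c2.
have c3 := congr1 (coord (vbasis (fullv : {vspace V})) i) h3; rewrite ?raddfB ?raddfD ?raddfN in c3.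
have c4 := congr1 (coord (vbasis (fullv : {vspace V})) i) h4; rewrite ?raddfB ?raddfD ?raddfN in c4.
have c5 := congr1 (coord (vbasis (fullv : {vspace V})) i) h5; rewrite ?raddfB ?raddfD ?raddfN in c5.
have c6 := congr1 (coord (vbasis (fullv : {vspace V})) i) h6; rewrite ?raddfB ?raddfD ?raddfN in c6.
have c7 := congr1 (coord (vbasis (fullv : {vspace V})) i) h7; rewrite ?raddfB ?raddfD ?raddfN in c7.
have c8 := congr1 (coord (vbasis (fullv : {vspace V})) i) h8; rewrite ?raddfB ?raddfD ?raddfN in c8.
have c9 := congr1 (coord (vbasis (fullv : {vspace V})) i) h9; rewrite ?raddfB ?raddfD ?raddfN in c9.
have c10 := congr1 (coord (vbasis (fullv : {vspace V})) i) h10; rewrite ?raddfB ?raddfD ?raddfN in c10.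
have c11 := congr1 (coord (vbasis (fullv : {vspace V})) i) h11; rewrite ?raddfB ?raddfD ?raddfN in c11.
have c12 := congr1 (coord (vbasis (fullv : {vspace V})) i) h12; rewrite ?raddfB ?raddfD ?raddfN in c12.
have c13 := congr1 (coord (vbasis (fullv : {vspace V})) i) h13; rewrite ?raddfB ?raddfD ?raddfN in c13.
have c14 := congr1 (coord (vbasis (fullv : {vspace V})) i) h14; rewrite ?raddfB ?raddfD ?raddfN in c14.
have c15 := congr1 (coord (vbasis (fullv : {vspace V})) i) h15; rewrite ?raddfB ?raddfD ?raddfN in c15.
have c16 := congr1 (coord (vbasis (fullv : {vspace V})) i) h16; rewrite ?raddfB ?raddfD ?raddfN in c16.
have c17 := congr1 (coord (vbasis (fullv : {vspace V})) i) o0; rewrite ?raddfB ?raddfD ?raddfN in c17.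
have c18 := congr1 (coord (vbasis (fullv : {vspace V})) i) o1; rewrite ?raddfB ?raddfD ?raddfN in c18.
have c19 := congr1 (coord (vbasis (fullv : {vspace V})) i) o2; rewrite ?raddfB ?raddfD ?raddfN in c19.
have c20 := congr1 (coord (vbasis (fullv : {vspace V})) i) o3; rewrite ?raddfB ?raddfD ?raddfN in c20.
have c21 := congr1 (coord (vbasis (fullv : {vspace V})) i) o4; rewrite ?raddfB ?raddfD ?raddfN in c21.
have c22 := congr1 (coord (vbasis (fullv : {vspace V})) i) o5; rewrite ?raddfB ?raddfD ?raddfN in c22.
have c23 := congr1 (coord (vbasis (fullv : {vspace V})) i) o6; rewrite ?raddfB ?raddfD ?raddfN in c23.
have c24 := congr1 (coord (vbasis (fullv : {vspace V})) i) o7; rewrite ?raddfB ?raddfD ?raddfN in c24.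
have c25 := congr1 (coord (vbasis (fullv : {vspace V})) i) o8; rewrite ?raddfB ?raddfD ?raddfN in c25.
have c26 := congr1 (coord (vbasis (fullv : {vspace V})) i) o9; rewrite ?raddfB ?raddfD ?raddfN in c26.
have c27 := congr1 (coord (vbasis (fullv : {vspace V})) i) o10; rewrite ?raddfB ?raddfD ?raddfN in c27.
have c28 := congr1 (coord (vbasis (fullv : {vspace V})) i) o11; rewrite ?raddfB ?raddfD ?raddfN in c28.
have c29 := congr1 (coord (vbasis (fullv : {vspace V})) i) o12; rewrite ?raddfB ?raddfD ?raddfN in c29.
have c30 := congr1 (coord (vbasis (fullv : {vspace V})) i) o13; rewrite ?raddfB ?raddfD ?raddfN in c30.
have c31 := congr1 (coord (vbasis (fullv : {vspace V})) i) o14; rewrite ?raddfB ?raddfD ?raddfN in c31.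
have c32 := congr1 (coord (vbasis (fullv : {vspace V})) i) o15; rewrite ?raddfB ?raddfD ?raddfN in c32.
have c33 := congr1 (coord (vbasis (fullv : {vspace V})) i) o16; rewrite ?raddfB ?raddfD ?raddfN in c33.
have c34 := congr1 (coord (vbasis (fullv : {vspace V})) i) o17; rewrite ?raddfB ?raddfD ?raddfN in c34.
have c35 := congr1 (coord (vbasis (fullv : {vspace V})) i) o18; rewrite ?raddfB ?raddfD ?raddfN in c35.
have c36 := congr1 (coord (vbasis (fullv : {vspace V})) i) o19; rewrite ?raddfB ?raddfD ?raddfN in c36.
have c37 := congr1 (coord (vbasis (fullv : {vspace V})) i) o20; rewrite ?raddfB ?raddfD ?raddfN in c37.
have c38 := congr1 (coord (vbasis (fullv : {vspace V})) i) o21; rewrite ?raddfB ?raddfD ?raddfN in c38.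
have c39 := congr1 (coord (vbasis (fullv : {vspace V})) i) o22; rewrite ?raddfB ?raddfD ?raddfN in c39.
have c40 := congr1 (coord (vbasis (fullv : {vspace V})) i) o23; rewrite ?raddfB ?raddfD ?raddfN in c40.
have c41 := congr1 (coord (vbasis (fullv : {vspace V})) i) o24; rewrite ?raddfB ?raddfD ?raddfN in c41.
have c42 := congr1 (coord (vbasis (fullv : {vspace V})) i) o25; rewrite ?raddfB ?raddfD ?raddfN in c42.
have c43 := congr1 (coord (vbasis (fullv : {vspace V})) i) o26; rewrite ?raddfB ?raddfD ?raddfN in c43.
have c44 := congr1 (coord (vbasis (fullv : {vspace V})) i) o27; rewrite ?raddfB ?raddfD ?raddfN in c44.
have c45 := congr1 (coord (vbasis (fullv : {vspace V})) i) o28; rewrite ?raddfB ?raddfD ?raddfN in c45.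
have c46 := congr1 (coord (vbasis (fullv : {vspace V})) i) o29; rewrite ?raddfB ?raddfD ?raddfN in c46.
have := cert c0 c1 c2 c3 c4 c5 c6 c7 c8 c9 c10 c11 c12 c13 c14 c15 c16 c17 c18 c19 c20 c21 c22 c23 c24 c25 c26 c27 c28 c29 c30 c31 c32 c33 c34 c35 c36 c37 c38 c39 c40 c41 c42 c43 c44 c45 c46.
by move/eqP; rewrite mulrn_eq0 /= => /eqP.
Qed.

Lemma m0l z : m 0 z = 0.
Proof. have := mDl 0 0 z; rewrite addr0 => e; apply: (@addrI _ (m 0 z)); by rewrite -e addr0. Qed.

Lemma msum n (f : 'I_n -> V) y : m (\sum_(i < n) f i) y = \sum_(i < n) m (f i) y.
Proof. exact: (big_morph (fun u => m u y) (fun u v => mDl u v y) (m0l y)). Qed.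

Lemma p_kill (p : {vspace V}) : perfect br p -> forall a u v, a \in p -> m a (m u v) = 0.
Proof.
move=> [_ hP] a u v ap; have [n [xs [ys [_ ->]]]] := hP a ap.
by rewrite msum; apply: big1 => i _; exact: key.
Qed.

Lemma main_lemma (p : {vspace V}) : perfect br p -> forall x y, x \in p -> m x y = 0.
Proof.
move=> Hp x y xp; have [n [xs [ys [hxy ->]]]] := Hp.2 x xp.
rewrite msum; apply: big1 => i _; rewrite hR1.
by have [h1 h2] := hxy i; rewrite !(@p_kill p Hp) // subrr.
Qed.
End CPA.

Theorem theorem3p4 (R : realType) (V : vectType R[i])
    (br : V -> V -> V) (p : {vspace V}) (m : V -> V -> V) :
  lie_bracket br -> lie_subalgebra br p -> perfect br p ->
  CPA_structure br m ->
  forall x y : V, x \in p -> m x y = 0.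
Proof.
move=> Hbr _ Hp Hm.
exact: (@main_lemma _ _ br m Hbr Hm p Hp).
Qed.
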